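(* Let $P$ be a finite poset and $\alpha:P\to\mathbb{N}$ an isotone map; for $i\in\mathbb{N}$ let $I_i=\alpha^{-1}(\{0,1,\dots,i\})$. Then the principal letterplace ideal $L(\alpha,P)$ is generated by the monomials $m_\phi=\prod_{j=0}^{i}x_{\phi(j),j}$, where $i\in\mathbb{N}$ and $\phi:\{0<1<\dots<i\}\to P$ is an isotone map with $\phi(i)\in I_i$. The minimal generators of $L(\alpha,P)$ are the $m_\phi$ for such $\phi$ which moreover satisfy $\phi(j)\notin I_j$ for all $j<i$.
   Context: $\mathbb{N}=\{0,1,2,\dots\}$; $\mathrm{Hom}(P,\mathbb{N})$ is the set of isotone maps $P\to\mathbb{N}$ ordered pointwise. The ascent of $\psi\in\mathrm{Hom}(P,\mathbb{N})$ is $\Lambda\psi=\{(p,i)\in P\times\mathbb{N}: \psi(q)\le i<\psi(p)\ \forall q<p\}$. $k$ is a field and $k[x_{P\times\mathbb{N}}]$ the polynomial ring in variables $x_{p,i}$; $m_T=\prod_{t\in T}x_t$. For a poset ideal $\mathcal{J}\subseteq\mathrm{Hom}(P,\mathbb{N})$ with complement $\mathcal{J}^c$, the letterplace ideal $L(\mathcal{J},P)$ is generated by $m_{\Lambda\psi}$, $\psi\in\mathcal{J}^c$. For isotone $\alpha$, $\mathcal{J}(\alpha)=\{\psi\in\mathrm{Hom}(P,\mathbb{N}):\psi\le\alpha\}$ and $L(\alpha,P)=L(\mathcal{J}(\alpha),P)$. *)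

(* Defs.v *)
From HB Require Import structures.
From mathcomp Require Import all_boot all_order all_algebra.
From mathcomp Require Import finmap.
From mathcomp Require Import monalg.

Set Implicit Arguments.
Unset Strict Implicit.
Unset Printing Implicit Defensive.

Import Order.TTheory GRing.Theory.
Local Open Scope ring_scope.

Definition polyring (k : fieldType) (V : choiceType) := {malg k[{cmonom V}]}.

Definition var (k : fieldType) (V : choiceType) (t : V) : polyring k V :=
  << ucm t >>.

Definition ideal_gen (R : comNzRingType) (S : R -> Prop) : R -> Prop :=
  fun r => exists (n : nat) (c g : 'I_n -> R),
      (forall j, S (g j)) /\ r = \sum_(j < n) c j * g j.

Definition is_monomial (k : fieldType) (V : choiceType) (f : polyring k V) :=
  exists m : {cmonom V}, f = << m >>.

Arguments var k {V} t.

Definition minimal_generators (k : fieldType) (V : choiceType)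
    (I : polyring k V -> Prop) : polyring k V -> Prop :=
  fun u => [/\ is_monomial u, I u &
     forall v, is_monomial v -> I v -> (exists r, u = r * v) -> v = u].

Definition isotone (d : Order.disp_t) (P : porderType d) (f : P -> nat) :=
  forall x y : P, (x <= y)%O -> (f x <= f y)%N.

Definition isotone_ord (d : Order.disp_t) (P : porderType d) (n : nat)
    (phi : 'I_n -> P) :=
  forall j j' : 'I_n, (j <= j')%N -> (phi j <= phi j')%O.

Definition ascent (d : Order.disp_t) (P : finPOrderType d) (psi : P -> nat)
    (t : P * nat) : bool :=
  (t.2 < psi t.1)%N && [forall q : P, (q < t.1)%O ==> (psi q <= t.2)%N].

(* m_{Lambda psi} = prod_{t in Lambda psi} x_t  (Lambda psi is contained in
   {(p,i) : i < psi p}, a finite set) *)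
Definition m_ascent (k : fieldType) (d : Order.disp_t) (P : finPOrderType d)
    (psi : P -> nat) : polyring k (P * nat)%type :=
  \prod_(p : P) \prod_(i < psi p | ascent psi (p, val i)) var k (p, val i).

Arguments m_ascent k {d P} psi.

Definition letterplace (k : fieldType) (d : Order.disp_t) (P : finPOrderType d)
    (J : (P -> nat) -> Prop) : polyring k (P * nat)%type -> Prop :=
  ideal_gen (fun f => exists psi : P -> nat,
                [/\ isotone psi, ~ J psi & f = m_ascent k psi]).

Arguments letterplace k {d P} J _.

Definition Jalpha (d : Order.disp_t) (P : finPOrderType d) (alpha : P -> nat) :
    (P -> nat) -> Prop :=
  fun psi => isotone psi /\ forall p, (psi p <= alpha p)%N.

Definition letterplace_alpha (k : fieldType) (d : Order.disp_t)
    (P : finPOrderType d) (alpha : P -> nat) :=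
  letterplace k (Jalpha alpha).

Arguments letterplace_alpha k {d P} alpha _.

Definition Ipre (d : Order.disp_t) (P : finPOrderType d) (alpha : P -> nat)
    (i : nat) : pred P := fun p => (alpha p <= i)%N.

Definition m_phi (k : fieldType) (d : Order.disp_t) (P : finPOrderType d)
    (i : nat) (phi : 'I_i.+1 -> P) : polyring k (P * nat)%type :=
  \prod_(j < i.+1) var k (phi j, val j).

Arguments m_phi k {d P i} phi.

(* Main.v *)
Require Import Defs.
From HB Require Import structures.
From mathcomp Require Import all_boot all_order all_algebra.
From mathcomp Require Import finmap.
From mathcomp Require Import monalg.
From mathcomp Require Import zify.
Import Order.TTheory GRing.Theory.
Set Implicit Arguments.
Unset Strict Implicit.
Local Open Scope ring_scope.

Section S.
Variables (k : fieldType) (d : Order.disp_t) (P : finPOrderType d).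
Local Notation V := (P * nat)%type.
Local Notation R := (polyring k V).

Definition chain (i : nat) (f : nat -> P) :=
  forall j j', (j <= j')%N -> (j' <= i)%N -> (f j <= f j')%O.
Definition Mf (i : nat) (f : nat -> P) : R := \prod_(j < i.+1) var k (f j, val j).

Lemma m_ascent_exch (psi : P -> nat) N : (forall p, (psi p <= N)%N) ->
  m_ascent k psi = \prod_(t < N) \prod_(p | ascent psi (p, val t)) var k (p, val t).
Proof.
move=> HN; rewrite /m_ascent.
transitivity (\prod_(p : P) \prod_(t < N) (if ascent psi (p, val t) then var k (p, val t) else 1)).
  apply: eq_bigr => p _.
  rewrite (big_ord_widen_cond N (fun t => ascent psi (p, t)) (fun t => var k (p, t)) (HN p)) big_mkcond.
  apply: eq_bigr => t _.
  case H: (ascent psi (p, val t)) => //=.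
  by move: H; rewrite /ascent /= => /andP[-> _].
rewrite exchange_big; apply: eq_bigr => t _; by rewrite [RHS]big_mkcond.
Qed.
Lemma asc_lt (psi : P -> nat) p t : ascent psi (p, t) -> (t < psi p)%N.
Proof. by case/andP. Qed.

Lemma gen_in_L (alpha : P -> nat) i f : chain i f -> (alpha (f i) <= i)%N ->
  exists psi (r : R), [/\ isotone psi, ~ Jalpha alpha psi & Mf i f = r * m_ascent k psi].
Proof.
move=> Hc Ha.
pose psi p := (\max_(j < i.+1 | (f j <= p)%O) j.+1)%N.
have Hpsi_ge p (j : 'I_i.+1) : (f j <= p)%O -> (j.+1 <= psi p)%N.
  by move=> H; apply: (@leq_bigmax_cond _ (fun j : 'I_i.+1 => (f j <= p)%O) (fun j : 'I_i.+1 => j.+1)).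
have Hpsi_le p : (psi p <= i.+1)%N by apply/bigmax_leqP => j _; exact: ltn_ord.
have Hiso : isotone psi.
  move=> p p' Hpp'; apply/bigmax_leqP => j Hj; apply: Hpsi_ge; exact: le_trans Hpp'.
have Hasc p t : ascent psi (p, t) -> (t <= i)%N /\ p = f t.
  move=> /andP[/= Htp /forallP Hq].
  case: (boolP [exists j : 'I_i.+1, (f j <= p)%O && (t < j.+1)%N]); last first.
    rewrite negb_exists => /forallP Hn; exfalso; move: Htp; apply/negP; rewrite -leqNgt.
    apply/bigmax_leqP => j Hj; have := Hn j; rewrite Hj /= -leqNgt; done.
  case/existsP => j /andP[Hjp Htj].
  have Hti : (t <= i)%N by rewrite ltnS in Htj; exact: leq_trans Htj (ltn_ord j : (j <= i)%N).
  split => //.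
  have Hft : (f t <= p)%O by apply: le_trans Hjp; apply: Hc => //; rewrite -ltnS; exact: ltn_ord.
  move: Hft; rewrite le_eqVlt => /orP[/eqP -> //|Hlt].
  have := Hq (f t); rewrite Hlt /= => Hle.
  have := Hpsi_ge (f t) (Ordinal (Hti : (t < i.+1)%N)) (lexx _); rewrite /= => Hge.
  by have := leq_trans Hge Hle; rewrite ltnn.
exists psi, (\prod_(t < i.+1) (if ascent psi (f t, val t) then 1 else var k (f t, val t))).
split; first exact: Hiso.
  case=> _ /(_ (f i)); apply/negP; rewrite -ltnNge; apply: leq_ltn_trans Ha _.
  exact: (Hpsi_ge (f i) ord_max (lexx _)).
rewrite (m_ascent_exch Hpsi_le) /Mf -big_split; apply: eq_bigr => t _.
have -> : \prod_(p | ascent psi (p, val t)) var k (p, val t) =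
   (if ascent psi (f t, val t) then var k (f t, val t) else 1).
  case: ifP => Ht.
    rewrite (eq_bigl (fun p => p == f t)); first exact: big_pred1_eq.
    move=> p; apply/idP/eqP => [Hp|->]; last exact: Ht.
    by have [_ Hpe] := Hasc _ _ Hp.
  apply: (big1 _ (fun p => ascent psi (p, val t))) => p Hp.
  exfalso; have [_ Hpe] := Hasc _ _ Hp.
  by move: Ht; rewrite -Hpe Hp.
case: (ascent psi (f t, val t)); [exact: esym (mul1r _) | exact: esym (mulr1 _)].
Qed.
Lemma min_below (psi : P -> nat) p t : (t < psi p)%N ->
  exists q, (q <= p)%O /\ ascent psi (q, t).
Proof.
move=> Ht.
have H0 : (p <= p)%O && (t < psi p)%N by rewrite lexx Ht.
case: (@arg_minnP P p (fun q => (q <= p)%O && (t < psi q)%N) (fun q => #|[pred x : P | (x < q)%O]|) H0) => q /andP[Hqp Htq] Hmin.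
exists q; split => //; apply/andP; split => //=.
apply/forallP => q'; apply/implyP => Hq'.
rewrite leqNgt; apply/negP => Htq'.
have := Hmin q'; rewrite (le_trans (ltW Hq') Hqp) Htq' => /(_ isT).
apply/negP; rewrite -ltnNge; apply: proper_card.
apply/properP; split.
  by apply/subsetP => x; rewrite !inE => Hx; exact: lt_trans Hx Hq'.
by exists q'; rewrite !inE ?ltxx.
Qed.

Lemma chain_exists (psi : P -> nat) t : forall p, (t < psi p)%N ->
  exists f, [/\ chain t f, (f t <= p)%O & forall j, (j <= t)%N -> ascent psi (f j, j)].
Proof.
elim: t => [|t IH] p Ht.
  have [q [Hqp Hq]] := min_below Ht.
  exists (fun _ => q); split.
  - by move=> j j' _ _; exact: lexx.
  - exact: Hqp.
  - by move=> j; rewrite leqn0 => /eqP ->.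
have [q [Hqp Hq]] := min_below Ht.
have [f [Hc Hft Ha]] := IH q (ltnW (asc_lt Hq)).
exists (fun j => if j == t.+1 then q else f j); split.
- move=> j j' Hjj' Hj'.
  case: eqP => [Ej|Ej]; case: eqP => [Ej'|Ej'].
  + exact: lexx.
  + by exfalso; subst j; move: Hj'; rewrite leq_eqVlt ltnS => /orP[/eqP//|Hj'']; move: (leq_trans Hjj' Hj''); rewrite ltnn.
  + have Hjt : (j <= t)%N by rewrite -ltnS ltn_neqAle; apply/andP; split; [apply/eqP|rewrite -Ej'].
    exact: le_trans (Hc _ _ Hjt (leqnn t)) Hft.
  + have Hj't : (j' <= t)%N by rewrite -ltnS ltn_neqAle Hj' andbT; apply/eqP.
    exact: Hc.
- by rewrite eqxx.
- move=> j Hj; case: eqP => [->//|Ej]; apply: Ha.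
  by rewrite -ltnS ltn_neqAle Hj andbT; apply/eqP.
Qed.
Lemma L_div (alpha : P -> nat) (psi : P -> nat) : isotone alpha -> isotone psi ->
  ~ Jalpha alpha psi ->
  exists i f (r : R), [/\ chain i f, (alpha (f i) <= i)%N & m_ascent k psi = r * Mf i f].
Proof.
move=> Hal Hiso HJ.
case: (boolP [forall p, (psi p <= alpha p)%N]) => [/forallP Hall|].
  by exfalso; apply: HJ; split => // p; exact: Hall.
rewrite negb_forall => /existsP [p0]; rewrite -ltnNge => Hp0.
have [f [Hc Hfi Ha]] := chain_exists Hp0.
exists (alpha p0), f.
set i := alpha p0.
pose N := (\max_(p : P) psi p)%N.
have HN p : (psi p <= N)%N by exact: (@leq_bigmax _ (fun p => psi p)).
have HiN : (i < N)%N by apply: leq_trans (HN (f i)); apply: asc_lt; exact: Ha.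
exists (\prod_(t < N) (if (val t < i.+1)%N then
          \prod_(p | ascent psi (p, val t) && (p != f t)) var k (p, val t)
        else \prod_(p | ascent psi (p, val t)) var k (p, val t))).
split => //; first exact: Hal.
rewrite (m_ascent_exch HN) mulrC /Mf.
rewrite (big_ord_widen N (fun t => var k (f t, t)) HiN) [X in X * _]big_mkcond -big_split.
apply: eq_bigr => t _ /=.
case: ifP => Ht; last by rewrite mul1r.
by rewrite (bigD1 (f t)) //; apply: Ha; rewrite -ltnS.
Qed.
Lemma malgUM (m1 m2 : {cmonom V}) : (<< m1 >> : R) * << m2 >> = << mmul m1 m2 >>.
Proof. by rewrite malgM_def fgmulUU mulr1. Qed.

Lemma malgU1 : (<< mone >> : R) = 1.
Proof. by rewrite -mpolyC1E. Qed.

Lemma coefU_neq0 (r : R) (n m : {cmonom V}) : (r * << n >>)@_m != 0 -> exists s, m = mmul s n.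
Proof.
rewrite mcoeffMr msuppU1 big_seq_fset1 => H.
case: (boolP [exists s : msupp r, mmul (val s) n == m]).
  by case/existsP => s /eqP <-; exists (val s).
rewrite negb_exists => /forallP Hn; move: H; rewrite big1_fset ?eqxx //.
move=> s Hs _; have := Hn [` Hs]%fset; rewrite /= => /negbTE ->; by rewrite mulr0n.
Qed.

Definition cmf (i : nat) (f : nat -> P) : {cmonom V} :=
  \big[mmul/mone]_(j < i.+1) ucm (f j, val j).

Lemma Mf_U i f : Mf i f = << cmf i f >>.
Proof.
rewrite /Mf /cmf; apply: esym.
exact: (big_morph (fun m : {cmonom V} => (<< m >> : R)) (fun x y => esym (malgUM x y)) malgU1).
Qed.

Lemma cmf_eval i f x : cmf i f x = (\sum_(j < i.+1) ((f j, val j) == x))%N.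
Proof.
rewrite /cmf (big_morph (fun m : {cmonom V} => m x) (fun a b => cmM x a b) (cm1 x)).
by apply: eq_bigr => j _; rewrite cmU.
Qed.

Lemma ideal_mono (S S' : R -> Prop) f : ideal_gen S f ->
  (forall g, S g -> exists r h, S' h /\ g = r * h) -> ideal_gen S' f.
Proof.
move=> [n [c [g [HS ->]]]] H.
have : forall j : 'I_n, exists rh : R * R, S' rh.2 /\ g j = rh.1 * rh.2.
  move=> j; have [r [h [H1 H2]]] := H _ (HS j); by exists (r, h).
case/fin_all_exists => u Hu.
exists n, (fun j => c j * (u j).1), (fun j => (u j).2); split.
  by move=> j; case: (Hu j).
apply: eq_bigr => j _; case: (Hu j) => _ ->; by rewrite mulrA.
Qed.

Lemma ideal_gen_base (S : R -> Prop) g : S g -> ideal_gen S g.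
Proof.
move=> Hg; exists 1%N, (fun _ => 1), (fun _ => g); split => //.
by rewrite big_ord1 mul1r.
Qed.

Lemma mon_in_ideal (S : R -> Prop) v : is_monomial v -> ideal_gen S v ->
  (forall g, S g -> is_monomial g) ->
  exists g s, S g /\ v = << s >> * g.
Proof.
move=> [m ->] [n [c [g [HS Hv]]]] Hmon.
have H1 : (<< m >> : R)@_m = 1 by rewrite mcoeffUU.
case: (boolP [exists j : 'I_n, (c j * g j)@_m != 0]).
  case/existsP => j Hj; have [n' Hn'] := Hmon _ (HS j).
  rewrite Hn' in Hj; have [s Hs] := coefU_neq0 Hj.
  exists (g j), s; split; first exact: HS.
  rewrite Hn' Hs; exact: esym (malgUM s n').
rewrite negb_exists => /forallP Hn; exfalso.
move: H1; rewrite Hv raddf_sum big1 => [|j _]; last by apply/eqP; rewrite -[_ == 0]negbK Hn.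
by move/eqP; rewrite eq_sym oner_eq0.
Qed.

Lemma Ipre_in (alpha : P -> nat) j p : (p \in Ipre alpha j) = (alpha p <= j)%N.
Proof. by []. Qed.

Lemma conv_phi i (phi : 'I_i.+1 -> P) : isotone_ord phi ->
  [/\ chain i (fun n => phi (inord n)), m_phi k phi = Mf i (fun n => phi (inord n))
    & phi ord_max = phi (inord i)].
Proof.
move=> Hiso; split.
- move=> j j' Hjj' Hj'; have Hj : (j <= i)%N := leq_trans Hjj' Hj'.
  by apply: Hiso; rewrite !inordK ?ltnS.
- rewrite /m_phi /Mf; apply: eq_bigr => j _; rewrite inord_val; reflexivity.
- f_equal; apply: val_inj; by rewrite /= inordK.
Qed.

Lemma conv_f i (f : nat -> P) : chain i f ->
  isotone_ord (fun j : 'I_i.+1 => f j) /\ Mf i f = m_phi k (fun j : 'I_i.+1 => f j).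
Proof.
move=> Hc; split; last reflexivity.
move=> j j' Hjj'; apply: Hc => //; by rewrite -ltnS.
Qed.

End S.
Arguments Mf k {d P} i f.
Arguments Mf_U k {d P} i f.

Theorem theorem4p7 (k : fieldType) (d : Order.disp_t) (P : finPOrderType d)
    (alpha : P -> nat) (Halpha : isotone alpha) :
  (forall f : polyring k (P * nat)%type,
      letterplace_alpha k alpha f <->
      ideal_gen (fun g => exists (i : nat) (phi : 'I_i.+1 -> P),
                   [/\ isotone_ord phi, phi ord_max \in Ipre alpha i
                     & g = m_phi k phi]) f)
  /\
  (forall f : polyring k (P * nat)%type,
      minimal_generators (letterplace_alpha k alpha) f <->
      exists (i : nat) (phi : 'I_i.+1 -> P),
        [/\ isotone_ord phi, phi ord_max \in Ipre alpha i,
            (forall j : 'I_i.+1, (j < i)%N -> phi j \notin Ipre alpha j)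
          & f = m_phi k phi]).
Proof.
pose S3 := fun g : polyring k (P * nat)%type =>
  exists i f, [/\ chain i f, (alpha (f i) <= i)%N & g = Mf k i f].
have S2S3 : forall g, (exists (i : nat) (phi : 'I_i.+1 -> P),
     [/\ isotone_ord phi, phi ord_max \in Ipre alpha i & g = m_phi k phi]) -> S3 g.
  move=> g [i [phi [Hiso Hmax ->]]]; have [Hc Hm Ho] := conv_phi k Hiso.
  exists i, (fun n => phi (inord n)); split; [exact: Hc | rewrite -Ho; exact: Hmax | exact: Hm].
have S3S2 : forall g, S3 g -> exists (i : nat) (phi : 'I_i.+1 -> P),
     [/\ isotone_ord phi, phi ord_max \in Ipre alpha i & g = m_phi k phi].
  move=> g [i [f [Hc Ha ->]]]; have [Hiso Hm] := conv_f k Hc.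
  exists i, (fun j : 'I_i.+1 => f j); split; [exact: Hiso | exact: Ha | exact: Hm].
have part1 : forall v, letterplace_alpha k alpha v <-> ideal_gen S3 v.
  move=> v; split => H.
  - apply: (ideal_mono H) => g [psi [Hiso HJ ->]].
    have [i [f [r [Hc Ha Heq]]]] := L_div k Halpha Hiso HJ.
    exists r, (Mf k i f); split; last exact: Heq.
    exists i, f; split; [exact: Hc | exact: Ha | reflexivity].
  - apply: (ideal_mono H) => g [i [f [Hc Ha ->]]].
    have [psi [r [Hiso HJ Heq]]] := gen_in_L k Hc Ha.
    exists r, (m_ascent k psi); split; last exact: Heq.
    exists psi; split; [exact: Hiso | exact: HJ | reflexivity].
have S3mon : forall g, S3 g -> is_monomial g.
  move=> g [i [f [_ _ ->]]]; exists (cmf i f); exact: Mf_U.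
have mon_L : forall v, is_monomial v -> letterplace_alpha k alpha v ->
    exists i f s, [/\ chain i f, (alpha (f i) <= i)%N & v = << s >> * Mf k i f].
  move=> v Hv /part1 HL; have [g [s [[i [f [Hc Ha Hg]]] Hvs]]] := mon_in_ideal Hv HL S3mon.
  exists i, f, s; split; [exact: Hc | exact: Ha | rewrite Hvs Hg; reflexivity].
have gen_L : forall i f, chain i f -> (alpha (f i) <= i)%N ->
    letterplace_alpha k alpha (Mf k i f).
  move=> i f Hc Ha; apply/part1; apply: ideal_gen_base; exists i, f.
  split; [exact: Hc | exact: Ha | reflexivity].
split.
- move=> v; split => H.
  + apply: (ideal_mono ((part1 v).1 H)) => g Hg; exists 1, g; split.
      exact: S3S2.
    exact: esym (mul1r g).
  + apply/part1; apply: (ideal_mono H) => g Hg; exists 1, g; split.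
      exact: S2S3.
    exact: esym (mul1r g).
move=> u; split.
- case=> Hmon HL Hmin.
  have [i [f [s [Hc Ha Hu]]]] := mon_L u Hmon HL.
  have exQ : exists j, (alpha (f j) <= j)%N by exists i.
  case: (ex_minnP exQ) => i0 Hi0 Hmin0.
  have Hi0i : (i0 <= i)%N := Hmin0 i Ha.
  have Hc0 : chain i0 f := fun j j' H1 H2 => Hc j j' H1 (leq_trans H2 Hi0i).
  have EM : forall n, Mf k n f = \prod_(0 <= j < n.+1) var k (f j, j).
    move=> n; rewrite big_mkord; reflexivity.
  have Hsplit : Mf k i f = (\prod_(i0.+1 <= j < i.+1) var k (f j, j)) * Mf k i0 f.
    rewrite !EM (big_cat_nat (leq0n i0.+1) (Hi0i : (i0.+1 <= i.+1)%N)).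
    exact: mulrC.
  have Hmf0 : Mf k i0 f = u.
    apply: Hmin; first by exists (cmf i0 f); exact: Mf_U.
      exact: gen_L.
    exists (<< s >> * \prod_(i0.+1 <= j < i.+1) var k (f j, j)).
    rewrite Hu Hsplit; exact: mulrA.
  exists i0, (fun j : 'I_i0.+1 => f j); have [Hiso Hm] := conv_f k Hc0; split.
  + exact: Hiso.
  + exact: Hi0.
  + move=> j Hj; rewrite Ipre_in; apply/negP => Hq.
    by have := Hmin0 j Hq; rewrite leqNgt Hj.
  + rewrite -Hmf0; exact: Hm.
- case=> i [phi [Hiso Hmax Hmin' ->]].
  have [Hc Hm Ho] := conv_phi k Hiso.
  set f := (fun n : nat => phi (inord n)) in Hc Hm Ho.
  have Ha : (alpha (f i) <= i)%N by rewrite /f -Ho; exact: Hmax.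
  rewrite Hm; split.
  + by exists (cmf i f); exact: Mf_U.
  + exact: gen_L.
  + move=> v Hv HLv [r Hr].
    have [i' [g [s [Hc' Ha' Hvs]]]] := mon_L v Hv HLv.
    rewrite Hvs (Mf_U k i f) (Mf_U k i' g) malgUM in Hr.
    have H1 : (r * << mmul s (cmf i' g) >>)@_(cmf i f) != 0.
      rewrite -Hr mcoeffUU; exact: oner_neq0.
    have [s' Hs'] := coefU_neq0 H1.
    have Hagree : forall j, (j <= i')%N -> (j <= i)%N /\ f j = g j.
      move=> j Hj.
      have Hpos : (0 < cmf i f (g j, j))%N.
        rewrite Hs' !cmM; apply: (leq_trans _ (leq_addl _ _)); apply: (leq_trans _ (leq_addl _ _)).
        have Hj' : (j < i'.+1)%N by rewrite ltnS.
        rewrite cmf_eval (bigD1 (Ordinal Hj')); last by [].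
        rewrite /= eqxx; exact: leq_addr.
      move: Hpos; rewrite cmf_eval.
      case: (boolP [exists t : 'I_i.+1, (f t, val t) == (g j, j)]).
        case/existsP => t /eqP [Eft Et] _; subst j; split; [exact: (ltn_ord t) | exact: Eft].
      rewrite negb_exists => /forallP Hn.
      have Hz : (\sum_(t < i.+1) ((f t, val t) == (g j, j) : nat))%N = 0%N.
        apply: big1 => t _; by rewrite (negbTE (Hn t)).
      by rewrite Hz ltnn.
    have [Hi'i Hfg] := Hagree i' (leqnn i').
    have Hii' : (i <= i')%N.
      rewrite leqNgt; apply/negP => Hlt.
      have Hi'S : (i' < i.+1)%N by rewrite ltnS.
      have := Hmin' (inord i'); rewrite (inordK Hi'S) => /(_ Hlt) /negP; apply.
      rewrite Ipre_in; change (alpha (f i') <= i')%N; by rewrite Hfg.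
    have Ei : i' = i by apply/eqP; rewrite eqn_leq Hi'i Hii'.
    subst i'.
    have Ecmf : cmf i g = cmf i f.
      rewrite /cmf; apply: eq_bigr => j _; by rewrite (Hagree _ (ltn_ord j : (j <= i)%N)).2.
    have EMf : Mf k i g = Mf k i f.
      rewrite (Mf_U k i g) (Mf_U k i f) Ecmf; reflexivity.
    have Hdeg := congr1 mdeg Hs'.
    rewrite !mdegM Ecmf in Hdeg.
    have Hs0 : mdeg s = 0%N by lia.
    have Hs1 : s = mone := mdeg_eq0I Hs0.
    rewrite Hvs Hs1 malgU1 EMf; exact: mul1r.
Qed.
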